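(* Let $\sigma$ and $\tau$ be compositions of a positive integer $m$ with the same number of parts. Then for every positive integer $n$, the map $\Gamma(\mathsf{hypo}_n,\sigma)\to\Gamma(\mathsf{hypo}_n,\tau)$, $T\mapsto\pi_\tau(\overline{T})$, is an isomorphism of unlabelled directed graphs.
   Context: A quasi-array of size $m$ is an array $Q$ with cells $(i,j)$, $1\le i\le m$, $1\le j\le m-i+1$, each containing a positive integer, with first row weakly increasing and $Q_{(i,j)}=Q_{(1,i+j-1)}+i-1$. A quasi-ribbon tableau of shape $\sigma=(\sigma_1,\dots,\sigma_r)$ is a filling with positive integers of the diagram having $\sigma_i$ cells in row $i$, the leftmost cell of row $i+1$ directly below the rightmost cell of row $i$, weakly increasing along rows and strictly increasing down columns; its column reading is read column by column left to right, each column bottom to top. Quasi-Kashiwara operator $f_i$ on a word $u$: undefined if $u$ contains a subsequence $(i+1)\,i$ or no letter $i$; otherwise replaces the rightmost $i$ by $i+1$. $\Gamma(\mathsf{hypo}_n,\sigma)$ is the directed graph whose vertices are the quasi-ribbon tableaux of shape $\sigma$ with entries in $\{1,\dots,n\}$ (identified with column readings), with an edge $u\to f_i(u)$ labelled $i$, $1\le i\le n-1$, whenever defined. For a quasi-array $Q$ of size $m$ and composition $\tau$ of $m$, $\pi_\tau(Q)$ is the quasi-ribbon tableau formed by the cells of $Q$ making up a quasi-ribbon diagram of shape $\tau$ with first cell $(1,1)$; for a quasi-ribbon tableau $T$ of shape $\sigma$ with $m$ cells, $\overline{T}$ is the unique quasi-array of size $m$ with $\pi_\sigma(\overline{T})=T$.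 *)

(* Defs.v *)
From Stdlib Require Import ClassicalEpsilon.
From mathcomp Require Import all_boot.
Set Implicit Arguments. Unset Strict Implicit. Unset Printing Implicit Defensive.

Definition is_composition (m : nat) (s : seq nat) : Prop :=
  all (fun k => 0 < k) s /\ sumn s = m.

(* Cells (row, column), 1-based, of the quasi-ribbon diagram of shape s,
   given row by row, left to right; row i starts at column st.
   Row (i+1) starts directly below the rightmost cell of row i. *)
Fixpoint ribbon_rows (s : seq nat) (i st : nat) : seq (seq (nat * nat)) :=
  match s with
  | [::] => [::]
  | k :: s' => [seq (i, st + j) | j <- iota 0 k] :: ribbon_rows s' i.+1 (st + k - 1)
  end.

Definition ribbon_diagram (s : seq nat) := ribbon_rows s 1 1.

(* A filling is given as its list of rows; its shape is the sequence of
   row lengths. [cells T] lists ((row, col), entry). *)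
Definition shape (T : seq (seq nat)) : seq nat := map size T.

Definition cells (T : seq (seq nat)) : seq ((nat * nat) * nat) :=
  flatten [seq zip pr.1 pr.2 | pr <- zip (ribbon_diagram (shape T)) T].

Definition is_qrt (sigma : seq nat) (T : seq (seq nat)) : Prop :=
  shape T = sigma /\
  (forall x, x \in cells T -> 0 < x.2) /\
  (forall x y, x \in cells T -> y \in cells T ->
     x.1.1 = y.1.1 -> x.1.2 < y.1.2 -> x.2 <= y.2) /\
  (forall x y, x \in cells T -> y \in cells T ->
     x.1.2 = y.1.2 -> x.1.1 < y.1.1 -> x.2 < y.2).

(* Column reading: columns left to right, each column bottom to top.
   (All columns of a diagram with N cells lie in 1..N.) *)
Definition colread (T : seq (seq nat)) : seq nat :=
  flatten [seq rev [seq x.2 | x <- cells T & x.1.2 == c]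
          | c <- iota 1 (size (cells T))].

Definition qf (i : nat) (u : seq nat) : option (seq nat) :=
  if (i \notin u) || subseq [:: i.+1; i] u then None
  else Some (set_nth 0 u (size u - (index i (rev u)).+1) i.+1).

Definition vertex (n : nat) (sigma : seq nat) (T : seq (seq nat)) : Prop :=
  is_qrt sigma T /\ (forall x, x \in cells T -> x.2 <= n).

Definition edge (n : nat) (sigma : seq nat) (i : nat) (T T' : seq (seq nat)) : Prop :=
  vertex n sigma T /\ vertex n sigma T' /\ 1 <= i <= n.-1 /\
  qf i (colread T) = Some (colread T').

Definition uedge (n : nat) (sigma : seq nat) (T T' : seq (seq nat)) : Prop :=
  exists i, edge n sigma i T T'.

(* Quasi-arrays of size m, given as list of rows; row i (1-based) has
   m - i + 1 cells. qa Q (i,j) is the entry of cell (i,j). *)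
Definition qa (Q : seq (seq nat)) (p : nat * nat) : nat :=
  nth 0 (nth [::] Q p.1.-1) p.2.-1.

Definition is_quasi_array (m : nat) (Q : seq (seq nat)) : Prop :=
  size Q = m /\
  (forall i, 1 <= i <= m -> size (nth [::] Q i.-1) = m - i + 1) /\
  (forall i j, 1 <= i <= m -> 1 <= j <= m - i + 1 -> 0 < qa Q (i, j)) /\
  (forall j, 1 <= j < m -> qa Q (1, j) <= qa Q (1, j.+1)) /\
  (forall i j, 1 <= i <= m -> 1 <= j <= m - i + 1 ->
     qa Q (i, j) = qa Q (1, i + j - 1) + i - 1).

Definition pi_ (tau : seq nat) (Q : seq (seq nat)) : seq (seq nat) :=
  [seq [seq qa Q p | p <- r] | r <- ribbon_diagram tau].

(* overline T: the unique quasi-array of size m (= number of cells of T)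
   with pi_sigma(overline T) = T, where sigma is the shape of T. *)
Definition overline (T : seq (seq nat)) : seq (seq nat) :=
  epsilon (inhabits [::])
    (fun Q => is_quasi_array (sumn (shape T)) Q /\ pi_ (shape T) Q = T).

(* Main.v *)
Require Import Defs.
From Stdlib Require Import ClassicalEpsilon.
From mathcomp Require Import all_boot zify.
Set Implicit Arguments. Unset Strict Implicit. Unset Printing Implicit Defensive.

Lemma ribbon_geom s : all (fun k => 0 < k) s -> forall i st,
  let L := flatten (ribbon_rows s i st) in
  [/\ size L = sumn s,
   (forall k, k < size L -> let p := nth (0,0) L k in
      [/\ p.1 + p.2 = k + i + st, i <= p.1, st <= p.2 & p.1 < i + size s]),
   (forall k, k.+1 < size L -> let p := nth (0,0) L k in let q := nth (0,0) L k.+1 in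
      (q.1 = p.1 /\ q.2 = p.2.+1) \/ (q.1 = p.1.+1 /\ q.2 = p.2)),
   (0 < size L -> (nth (0,0) L 0).1 = i) &
   (0 < size L -> (nth (0,0) L (size L).-1).1 = i + size s - 1)].
Proof.
elim: s => [|k s IH] /=; first by move=> _ i st; split => //; case.
case/andP=> k0 hs; have {}IH := IH hs => i st.
have [Hs H1 H2 H3 H4] := IH i.+1 (st + k - 1).
set L' := flatten _ in Hs H1 H2 H3 H4 *.
set A := [seq (i, st + j) | j <- iota 0 k].
have sA : size A = k by rewrite size_map size_iota.
have nA : forall x, x < k -> nth (0,0) A x = (i, st + x).
  by move=> x hx; rewrite (nth_map 0) ?size_iota // nth_iota.
have nL : forall x, nth (0,0) (A ++ L') x = if x < k then (i, st + x) else nth (0,0) L' (x - k).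
  move=> x; rewrite nth_cat sA; case: ifP => // /nA //.
rewrite size_cat sA Hs; split => //.
- move=> x hx; rewrite nL; case: ifP => hxk /=; first by split; lia.
  have := H1 (x - k); rewrite Hs => /(_ ltac:(lia)) [? ? ? ?]; split; lia.
- move=> x hx; rewrite !nL; case: ifP => hxk; case: ifP => hxk' /=.
  + by left; split => //; lia.
  + lia.
  + have -> : x.+1 - k = 0 by lia.
    have := H3; rewrite Hs => /(_ ltac:(lia)).
    have [? ? ? ?] := H1 0 ltac:(lia).
    move=> e; right; split; lia.
  + have := H2 (x - k); rewrite Hs => /(_ ltac:(lia)).
    by have -> : x.+1 - k = (x - k).+1 by lia.
- by move=> _; rewrite nL; case: ifP => //; lia.
- move=> _; rewrite nL; have [e|sn] := eqVneq s [::].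
  + rewrite e /= ifT /=; lia.
  + have ps : 0 < sumn s.
      by case: s sn hs {IH Hs H1 H2 H3 H4 L' nL} => //= a l _ /andP[]; lia.
    rewrite ifF; last lia.
    have := H4; rewrite Hs => /(_ ps).
    move=> e; rewrite (_ : _ - k = (sumn s).-1) ?e /=; lia.
Qed.

Definition P s := flatten (ribbon_diagram s).
Definition rw s k := (nth (0,0) (P s) k).1.
Definition cl s k := (nth (0,0) (P s) k).2.

Lemma shape_ribbon s i st : shape (ribbon_rows s i st) = s.
Proof. by elim: s i st => //= k s IH i st; rewrite size_map size_iota IH. Qed.

Lemma geom s m : is_composition m s -> 0 < m ->
 [/\ size (P s) = m,
  (forall k, k < m -> [/\ rw s k + cl s k = k.+2, 1 <= rw s k, 1 <= cl s k & rw s k <= size s]),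
  (forall k, k.+1 < m -> (rw s k.+1 = rw s k /\ cl s k.+1 = (cl s k).+1) \/
                         (rw s k.+1 = (rw s k).+1 /\ cl s k.+1 = cl s k)),
  rw s 0 = 1 & rw s m.-1 = size s].
Proof.
case=> hp hm m0; have [H0 H1 H2 H3 H4] := ribbon_geom hp 1 1.
rewrite /rw /cl /P /ribbon_diagram; rewrite H0 hm in H1 H2 H3 H4; split => //.
- by rewrite H0.
- move=> k /H1 [] /= *; split; lia.
- by apply: H3.
- by rewrite H4 //; lia.
Qed.

Lemma geom_mono s m : is_composition m s -> 0 < m ->
  forall k l, k <= l -> l < m -> cl s k <= cl s l /\ rw s k <= rw s l.
Proof.
move=> hc m0 k; have [_ _ H2 _ _] := geom hc m0.
elim=> [|l IH] kl lm; first by have -> : k = 0 by lia.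
case: (ltngtP k l.+1) => h; last by rewrite h.
- have [] := IH ltac:(lia) ltac:(lia); case: (H2 l lm) => [][-> ->]; lia.
- lia.
Qed.

Lemma flatten_zip (A : seq (seq nat)) (C : seq (seq (nat * nat))) :
  shape C = shape A -> flatten [seq zip pr.1 pr.2 | pr <- zip C A] = zip (flatten C) (flatten A).
Proof.
elim: C A => [|c C IH] [|a A] //= [] e /IH ->; by rewrite zip_cat.
Qed.

Lemma cells_eq s T : shape T = s ->
  cells T = [seq (nth (0,0) (P s) k, nth 0 (flatten T) k) | k <- iota 0 (sumn s)].
Proof.
move=> sh; have sh' : map size T = s := sh.
rewrite /cells /Defs.shape sh' flatten_zip; last by rewrite /ribbon_diagram shape_ribbon.
have s1 : size (P s) = sumn s by rewrite /P size_flatten /ribbon_diagram shape_ribbon.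
have s2 : size (flatten T) = sumn s by rewrite size_flatten sh.
rewrite -/(P s); apply: (eq_from_nth (x0 := ((0,0),0))); rewrite size_zip.
  by rewrite (size_map _ (iota 0 (sumn s))) size_iota s1 s2 minnn.
move=> k hk; rewrite nth_zip ?s1 ?s2 // (nth_map 0) ?size_iota ?nth_iota //; lia.
Qed.

Definition idx s := flatten [seq rev [seq k <- iota 0 (sumn s) | cl s k == c] | c <- iota 1 (sumn s)].

Lemma colread_eq s T : shape T = s -> colread T = map (nth 0 (flatten T)) (idx s).
Proof.
move=> sh; rewrite /colread (cells_eq sh) size_map size_iota /idx map_flatten -map_comp.
congr flatten; apply: eq_map => c /=; rewrite map_rev; congr rev.
by rewrite filter_map -!map_comp.
Qed.

Definition R s (k l : nat) := (cl s k < cl s l) || ((cl s k == cl s l) && (l < k)).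

Lemma idx_pairwise_gen s m (cs : seq nat) : sorted ltn cs ->
  pairwise (R s) (flatten [seq rev [seq k <- iota 0 m | cl s k == c] | c <- cs]).
Proof.
elim: cs => [|c cs IH] // hs.
have := hs; rewrite (sorted_pairwise ltn_trans) /= => /andP[hall hpw].
rewrite /= pairwise_cat IH ?andbT; last by rewrite (sorted_pairwise ltn_trans).
apply/andP; split.
- apply/allrelP => x y; rewrite mem_rev mem_filter => /andP[/eqP xc _].
  case/flatten_mapP => c' c'in; rewrite mem_rev mem_filter => /andP[/eqP yc _].
  have : c < c' by move/allP: hall => /(_ _ c'in).
  by rewrite /R xc yc => ->.
- set L := [seq k <- _ | _].
  have hL : sorted ltn L by apply: sorted_filter => //; [exact: ltn_trans | exact: iota_ltn_sorted].
  have : pairwise (fun x y => y < x) (rev L).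
    rewrite -sorted_pairwise; last by move=> a b d h1 h2; exact: ltn_trans h2 h1.
    by rewrite rev_sorted.
  apply: sub_in_pairwise (_ : all (fun k => cl s k == c) (rev L)).
    move=> x y /eqP xc /eqP yc h; by rewrite /R xc yc eqxx h orbT.
  by rewrite all_rev; apply/allP => x; rewrite mem_filter => /andP[].
Qed.

Lemma idx_props s m : is_composition m s -> 0 < m ->
 [/\ (forall k, (k \in idx s) = (k < m)), uniq (idx s), size (idx s) = m &
  pairwise (R s) (idx s)].
Proof.
move=> hc m0; have [_ H1 _ _ _] := geom hc m0.
have hm : sumn s = m by case: hc.
have pw : pairwise (R s) (idx s) by apply: idx_pairwise_gen; exact: iota_ltn_sorted.
have un : uniq (idx s).
  by apply: pairwise_uniq pw => x; rewrite /R ltnn eqxx ltnn.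
have mem : forall k, (k \in idx s) = (k < m).
  move=> k; apply/idP/idP.
  - case/flatten_mapP => c _; rewrite mem_rev mem_filter mem_iota hm; by case/andP.
  - move=> km; apply/flatten_mapP; exists (cl s k).
      have [? ? ? ?] := H1 k km; rewrite mem_iota hm; lia.
    by rewrite mem_rev mem_filter eqxx mem_iota hm.
split => //.
have pe : perm_eq (idx s) (iota 0 m).
  by apply: uniq_perm => //; [exact: iota_uniq | move=> k; rewrite mem mem_iota].
by rewrite (perm_size pe) size_iota.
Qed.

Definition Vt s n (t : seq nat) :=
  [/\ size t = sumn s, (forall k, k < sumn s -> 0 < nth 0 t k <= n),
  (forall k l, k < sumn s -> l < sumn s -> rw s k = rw s l -> cl s k < cl s l -> nth 0 t k <= nth 0 t l) &
  (forall k l, k < sumn s -> l < sumn s -> cl s k = cl s l -> rw s k < rw s l -> nth 0 t k < nth 0 t l)].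

Lemma vertex_iff n s T : vertex n s T <-> shape T = s /\ Vt s n (flatten T).
Proof.
have memc : forall sh : seq nat, shape T = sh -> forall x, x \in cells T <->
    exists2 k, k < sumn sh & x = (nth (0,0) (P sh) k, nth 0 (flatten T) k).
  move=> sh e x; rewrite (cells_eq e); split.
  - by case/mapP => k; rewrite mem_iota => /andP[_ hk] ->; exists k.
  - by case=> k hk ->; apply/mapP; exists k => //; rewrite mem_iota.
split.
- case=> [[sh [pos [row col]]] bnd]; have sh' : shape T = s := sh.
  split => //; split.
  + by rewrite size_flatten sh'.
  + move=> k hk; have hx : (nth (0,0) (P s) k, nth 0 (flatten T) k) \in cells T.
      by apply/(memc _ sh'); exists k.
    by rewrite (pos _ hx) (bnd _ hx).
  + move=> k l hk hl e c.
    apply: (row (nth (0,0) (P s) k, nth 0 (flatten T) k) (nth (0,0) (P s) l, nth 0 (flatten T) l)) => //.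
    * by apply/(memc _ sh'); exists k.
    * by apply/(memc _ sh'); exists l.
  + move=> k l hk hl e c.
    apply: (col (nth (0,0) (P s) k, nth 0 (flatten T) k) (nth (0,0) (P s) l, nth 0 (flatten T) l)) => //.
    * by apply/(memc _ sh'); exists k.
    * by apply/(memc _ sh'); exists l.
- case=> sh [_ pos row col]; split; first split => //.
  + split; first by move=> x /(memc _ sh) [k hk ->] /=; case/andP: (pos k hk).
    split.
    * by move=> x y /(memc _ sh) [k hk ->] /(memc _ sh) [l hl ->] /=; apply: row.
    * by move=> x y /(memc _ sh) [k hk ->] /(memc _ sh) [l hl ->] /=; apply: col.
  + by move=> x /(memc _ sh) [k hk ->] /=; case/andP: (pos k hk).
Qed.

Section Shape.
Variables (m : nat) (s : seq nat) (n : nat).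
Hypothesis hc : is_composition m s.
Hypothesis m0 : 0 < m.

Lemma hm : sumn s = m. Proof. by case: hc. Qed.

Lemma Vt_step t : Vt s n t -> forall k, k.+1 < m ->
  (rw s k.+1 = rw s k /\ nth 0 t k <= nth 0 t k.+1) \/
  (rw s k.+1 = (rw s k).+1 /\ nth 0 t k < nth 0 t k.+1).
Proof.
case; rewrite hm => _ _ row col k hk; have [_ _ H2 _ _] := geom hc m0.
case: (H2 k hk) => [][e1 e2]; [left | right]; split => //.
- by apply: row; rewrite ?e1 ?e2 //; lia.
- by apply: col; rewrite ?e1 ?e2 //; lia.
Qed.

Lemma Vt_mono t : Vt s n t -> forall k l, k <= l -> l < m -> nth 0 t k <= nth 0 t l.
Proof.
move=> hv k; elim=> [|l IH] kl lm; first by have -> : k = 0 by lia.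
case: (ltngtP k l.+1) => h; last by rewrite h.
- have := IH ltac:(lia) ltac:(lia); case: (Vt_step hv lm) => [][_]; lia.
- lia.
Qed.

Lemma Vt_col t : Vt s n t -> forall d e, d < e -> e < m -> cl s d = cl s e -> nth 0 t d < nth 0 t e.
Proof.
move=> hv d e de em ce; case: hv; rewrite hm => _ _ _ col; apply: col => //; first lia.
have [_ H1 _ _ _] := geom hc m0.
have [? ? ? ?] := H1 d ltac:(lia); have [? ? ? ?] := H1 e em; lia.
Qed.

Lemma cl_mono d e : d <= e -> e < m -> cl s d <= cl s e.
Proof. by move=> de em; case: (geom_mono hc m0 de em). Qed.

Definition F (a : seq nat) := [seq nth 0 a k + rw s k - 1 | k <- iota 0 m].
Definition U (t : seq nat) := [seq nth 0 t k + 1 - rw s k | k <- iota 0 m].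
Definition valid (a : seq nat) := [/\ size a = m, 0 < nth 0 a 0,
  (forall k, k.+1 < m -> nth 0 a k <= nth 0 a k.+1) & nth 0 a m.-1 + size s <= n.+1].

Lemma valid_mono a : valid a -> forall k l, k <= l -> l < m -> nth 0 a k <= nth 0 a l.
Proof.
case=> _ _ st _ k; elim=> [|l IH] kl lm; first by have -> : k = 0 by lia.
case: (ltngtP k l.+1) => h; last by rewrite h.
- have := IH ltac:(lia) ltac:(lia); have := st l lm; lia.
- lia.
Qed.

Lemma nthF a k : k < m -> nth 0 (F a) k = nth 0 a k + rw s k - 1.
Proof. by move=> hk; rewrite (nth_map 0) ?size_iota // nth_iota. Qed.

Lemma nthU t k : k < m -> nth 0 (U t) k = nth 0 t k + 1 - rw s k.
Proof. by move=> hk; rewrite (nth_map 0) ?size_iota // nth_iota. Qed.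

Lemma fill_Vt a : valid a -> Vt s n (F a).
Proof.
move=> hv; have [_ H1 _ H3 H4] := geom hc m0.
have mono := valid_mono hv; case: hv => sa a0 _ last.
rewrite /Vt hm; split.
- by rewrite size_map size_iota.
- move=> k hk; rewrite nthF //; have [? ? ? ?] := H1 k hk.
  have := mono 0 k ltac:(lia) hk; have := mono k m.-1 ltac:(lia) ltac:(lia); lia.
- move=> k l hk hl e c; rewrite !nthF //.
  have [? ? ? ?] := H1 k hk; have [? ? ? ?] := H1 l hl.
  have := mono k l ltac:(lia) hl; lia.
- move=> k l hk hl e c; rewrite !nthF //.
  have [? ? ? ?] := H1 k hk; have [? ? ? ?] := H1 l hl.
  have := mono k l ltac:(lia) hl; lia.
Qed.

Lemma UF a : size a = m -> U (F a) = a.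
Proof.
move=> sa; have [_ H1 _ _ _] := geom hc m0.
apply: (eq_from_nth (x0 := 0)); first by rewrite size_map size_iota.
move=> k; rewrite size_map size_iota => hk; rewrite nthU // nthF //.
have [? ? ? ?] := H1 k hk; lia.
Qed.

Lemma Vt_valid t : Vt s n t -> valid (U t) /\ t = F (U t).
Proof.
move=> hv; have [_ H1 _ H3 H4] := geom hc m0.
have ge : forall k, k < m -> rw s k <= nth 0 t k.
  elim=> [|k IH] hk.
  - by rewrite H3; case: hv => _ /(_ 0); rewrite hm => /(_ hk) /andP[].
  - have := IH ltac:(lia); case: (Vt_step hv hk) => [][]; lia.
have st : size t = m by case: hv; rewrite hm.
split; last first.
  apply: (eq_from_nth (x0 := 0)); first by rewrite st size_map size_iota.
  move=> k; rewrite st => hk; rewrite nthF // nthU //; have := ge k hk; lia.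
split.
- by rewrite size_map size_iota.
- rewrite nthU // H3; have := ge 0 m0; lia.
- move=> k hk; rewrite !nthU //; try lia.
  case: (Vt_step hv hk) => [][e h]; rewrite e; lia.
- rewrite nthU ?H4; last lia.
  case: hv; rewrite hm => _ /(_ m.-1 ltac:(lia)); have := ge m.-1 ltac:(lia); rewrite H4; lia.
Qed.

End Shape.
Lemma H_last (u : seq nat) i : i \in u ->
  let q := size u - (index i (rev u)).+1 in
  [/\ q < size u, nth 0 u q = i & forall q', q < q' -> q' < size u -> nth 0 u q' != i].
Proof.
move=> iu q.
have hi : index i (rev u) < size u by rewrite -size_rev index_mem mem_rev.
split.
- rewrite /q; lia.
- by rewrite /q -nth_rev // nth_index // mem_rev.
- move=> q' h1 h2.
  have -> : q' = size u - (size u - q').-1.+1 by lia.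
  rewrite -nth_rev; last lia.
  have : (size u - q').-1 < index i (rev u) by rewrite /q in h1; lia.
  rewrite /index => /(before_find 0) /=; by move/negbT.
Qed.

Lemma H_sub2 (x y : nat) u : subseq [:: x; y] u ->
  exists p q, [/\ p < q, q < size u, nth 0 u p = x & nth 0 u q = y].
Proof.
elim: u => [|z u IH] //=.
case: ifP => [/eqP <-|_].
- rewrite sub1seq => yu; exists 0, (index y u).+1; split => //=.
  + by rewrite ltnS index_mem.
  + by rewrite nth_index.
- move/IH => [p [q [h1 h2 h3 h4]]]; exists p.+1, q.+1; split => //.
Qed.

Lemma H_setmap (t idx : seq nat) q v : uniq idx -> q < size idx ->
  set_nth 0 [seq nth 0 t j | j <- idx] q v = [seq nth 0 (set_nth 0 t (nth 0 idx q) v) j | j <- idx].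
Proof.
move=> un hq; apply: (eq_from_nth (x0 := 0)).
  by rewrite size_set_nth !size_map; lia.
move=> j; rewrite size_set_nth size_map => hj.
have hj' : j < size idx by lia.
rewrite nth_set_nth /= (nth_map 0) // (nth_map 0) // nth_set_nth /=.
case: (eqVneq j q) => [->|nq]; first by rewrite eqxx.
by rewrite nth_uniq // (negbTE nq).
Qed.

Lemma H_inj (t t' idx : seq nat) m : size t = m -> size t' = m -> (forall k, k < m -> k \in idx) ->
  [seq nth 0 t j | j <- idx] = [seq nth 0 t' j | j <- idx] -> t = t'.
Proof.
move=> s1 s2 mem e; apply: (eq_from_nth (x0 := 0)); first by rewrite s1 s2.
move=> k; rewrite s1 => /mem ki.
have := congr1 (fun u => nth 0 u (index k idx)) e => /=.
by rewrite !(nth_map 0) ?index_mem // nth_index.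
Qed.

Section Edge.
Variables (m : nat) (s : seq nat) (n : nat).
Hypothesis hc : is_composition m s.
Hypothesis m0 : 0 < m.

Lemma edge_core T1 T2 : shape T1 = s -> shape T2 = s ->
  Vt s n (flatten T1) -> Vt s n (flatten T2) ->
  (exists i, 1 <= i <= n.-1 /\ qf i (colread T1) = Some (colread T2)) <->
  exists2 k, k < m & flatten T2 = set_nth 0 (flatten T1) k (nth 0 (flatten T1) k).+1.
Proof.
move=> sh1 sh2 hv1 hv2; rewrite (colread_eq sh1) (colread_eq sh2).
have [memI unI szI pwI] := idx_props hc m0.
have hm := hm hc.
set t1 := flatten T1 in hv1 *; set t2 := flatten T2 in hv2 *.
have st1 : size t1 = m by case: hv1; rewrite hm.
have st2 : size t2 = m by case: hv2; rewrite hm.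
set u1 := map (nth 0 t1) (idx s).
have su1 : size u1 = m by rewrite size_map szI.
split.
- case=> i [hi]; rewrite /qf; case: ifP => // /norP [/negbNE iu _] [e].
  have [hq uq _] := H_last iu.
  set q := (size u1 - _) in hq uq e.
  have hq' : q < size (idx s) by rewrite szI -su1.
  have km : nth 0 (idx s) q < m by rewrite -memI mem_nth.
  exists (nth 0 (idx s) q) => //.
  move: e; rewrite H_setmap // => /esym e.
  have ti : nth 0 t1 (nth 0 (idx s) q) = i by rewrite -uq /u1 (nth_map 0).
  rewrite ti; apply: (H_inj (m:=m) _ _ _ e) => //; first by rewrite size_set_nth st1; lia.
  by move=> x; rewrite memI.
- case=> k km e2.
  set i := nth 0 t1 k.
  have n2 : forall x, nth 0 t2 x = if x == k then i.+1 else nth 0 t1 x.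
    by move=> x; rewrite e2 nth_set_nth.
  have pos1 : 0 < i by case: hv1; rewrite hm => _ /(_ k km) /andP[].
  have bnd2 : i.+1 <= n by case: hv2; rewrite hm => _ /(_ k km); rewrite n2 eqxx => /andP[].
  exists i; split; first lia.
  have iu : i \in u1 by apply/mapP; exists k; rewrite ?memI.
  have mono1 := Vt_mono hc m0 hv1; have mono2 := Vt_mono hc m0 hv2.
  have col1 := Vt_col hc m0 hv1; have col2 := Vt_col hc m0 hv2.
  have clm := cl_mono hc m0.
  have nsub : ~~ subseq [:: i.+1; i] u1.
    apply/negP => /H_sub2 [p [q [hpq hq up uq]]].
    rewrite su1 in hq.
    have hp : p < m by lia.
    rewrite /u1 (nth_map 0) ?szI // in up; rewrite /u1 (nth_map 0) ?szI // in uq.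
    set e := nth 0 (idx s) p in up; set d := nth 0 (idx s) q in uq.
    have em : e < m by rewrite -memI mem_nth ?szI.
    have dm : d < m by rewrite -memI mem_nth ?szI.
    have Red : R s e d by move/(pairwiseP 0): pwI; apply => //; rewrite inE szI.
    have de : d < e.
      case: (ltnP d e) => // h; have := mono1 _ _ h dm; lia.
    have ce : cl s d = cl s e.
      have := clm _ _ (ltnW de) em; move: Red; rewrite /R; case/orP; [lia|case/andP => /eqP; lia].
    case: (ltngtP k d) => hkd.
    + have := mono2 _ _ (ltnW hkd) dm; rewrite !n2 eqxx; have -> : (d == k) = false by lia. lia.
    + case: (ltngtP k e) => hke.
      * have := clm _ _ (ltnW hkd) (ltn_trans hke em); have := clm _ _ (ltnW hke) em => c1 c2.
        have := col1 _ _ hkd km ltac:(lia); lia.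
      * have := mono1 _ _ (ltnW hke) km; lia.
      * by move: up; rewrite -hke -/i; lia.
    + have := col2 _ _ de em ce; rewrite !n2 hkd eqxx; have -> : (e == d) = false by lia. lia.
  rewrite /qf -/u1 iu (negbTE nsub) /=; congr Some.
  have [hq uq aft] := H_last iu.
  set q := (size u1 - _) in hq uq aft *.
  have hq' : q < size (idx s) by rewrite szI -su1.
  have kq : nth 0 (idx s) q = k.
    set d := nth 0 (idx s) q.
    have dm : d < m by rewrite -memI mem_nth.
    have td : nth 0 t1 d = i by rewrite -uq /u1 (nth_map 0).
    case: (ltngtP d k) => // hdk.
    + have cdk : cl s d < cl s k.
        have := clm _ _ (ltnW hdk) km; case: (ltngtP (cl s d) (cl s k)) => // h _.
        have := col1 _ _ hdk km h; lia.
      have kin : k \in idx s by rewrite memI.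
      set p := index k (idx s).
      have hp : p < size (idx s) by rewrite index_mem.
      have np : nth 0 (idx s) p = k by rewrite nth_index.
      case: (ltngtP p q) => hpq.
      * have : R s k d by rewrite -np; move/(pairwiseP 0): pwI; apply => //; rewrite inE.
        rewrite /R; case/orP; [lia|case/andP => /eqP; lia].
      * have := aft p hpq; rewrite su1 -szI => /(_ hp).
        by rewrite /u1 (nth_map 0) // np eqxx.
      * move: np; rewrite hpq -/d; lia.
    + have := mono2 _ _ (ltnW hdk) dm; rewrite !n2 eqxx; have -> : (d == k) = false by lia. lia.
  by rewrite H_setmap // kq e2.
Qed.

End Edge.

Definition Qa m (a : seq nat) :=
  [seq [seq nth 0 a (i + j - 2) + i - 1 | j <- iota 1 (m - i + 1)] | i <- iota 1 m].

Lemma qa_Qa m a i j : 1 <= i <= m -> 1 <= j <= m - i + 1 -> qa (Qa m a) (i, j) = nth 0 a (i + j - 2) + i - 1.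
Proof.
case: i => [|i] //; case: j => [|j] // hi hj; rewrite /qa /= /Qa.
rewrite (nth_map 0) ?size_iota; last lia.
rewrite nth_iota; last lia.
rewrite (nth_map 0) ?size_iota; last lia.
rewrite nth_iota; last lia.
by rewrite !add1n.
Qed.

Lemma pi_eq s Q : pi_ s Q = reshape s [seq qa Q p | p <- P s].
Proof.
rewrite /pi_ /P -map_reshape; congr map.
by rewrite -{1}(flattenK (ribbon_diagram s)) /ribbon_diagram shape_ribbon.
Qed.

Definition fill m s a := reshape s (F m s a).

Lemma sizeF m s a : size (F m s a) = m.
Proof. by rewrite size_map size_iota. Qed.

Section Main.
Variables (m : nat) (n : nat).
Hypothesis m0 : 0 < m.

Lemma flatten_fill s a : is_composition m s -> flatten (fill m s a) = F m s a.
Proof. by move=> hc; rewrite /fill reshapeKr // sizeF (hm hc). Qed.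

Lemma shape_fill s a : is_composition m s -> shape (fill m s a) = s.
Proof. by move=> hc; rewrite /fill reshapeKl // sizeF (hm hc). Qed.

Lemma vertex_fill s a : is_composition m s -> valid m s n a -> vertex n s (fill m s a).
Proof.
move=> hc hv; apply/vertex_iff; rewrite shape_fill // flatten_fill //; split => //.
exact: fill_Vt.
Qed.

Lemma vertex_inv s T : is_composition m s -> vertex n s T ->
  valid m s n (U m s (flatten T)) /\ T = fill m s (U m s (flatten T)).
Proof.
move=> hc /vertex_iff [sh hv]; have [va e] := Vt_valid hc m0 hv; split => //.
by rewrite /fill -e -sh flattenK.
Qed.

Lemma eq_nthP (l1 l2 : seq nat) : size l1 = m -> size l2 = m ->
  l1 = l2 <-> forall x, x < m -> nth 0 l1 x = nth 0 l2 x.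
Proof.
move=> s1 s2; split; first by move=> ->.
move=> h; apply: (eq_from_nth (x0 := 0)); first by rewrite s1 s2.
by move=> x; rewrite s1; apply: h.
Qed.

Lemma F_incr s a1 a2 k : is_composition m s -> size a1 = m -> size a2 = m -> k < m ->
  (F m s a2 = set_nth 0 (F m s a1) k (nth 0 (F m s a1) k).+1) <->
  (a2 = set_nth 0 a1 k (nth 0 a1 k).+1).
Proof.
move=> hc s1 s2 km; have [_ H1 _ _ _] := geom hc m0.
rewrite eq_nthP ?sizeF ?size_set_nth ?sizeF //; last lia.
rewrite eq_nthP ?size_set_nth ?s1 //; last lia.
split => h x hx; have := h x hx; rewrite !nth_set_nth /= !nthF //;
  have [? ? ? ?] := H1 x hx; have [? ? ? ?] := H1 k km;
  case: (eqVneq x k) => [->|_]; lia.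
Qed.

Lemma uedge_fill s a1 a2 : is_composition m s -> valid m s n a1 -> valid m s n a2 ->
  uedge n s (fill m s a1) (fill m s a2) <->
  exists2 k, k < m & a2 = set_nth 0 a1 k (nth 0 a1 k).+1.
Proof.
move=> hc v1 v2.
have vx1 := vertex_fill hc v1; have vx2 := vertex_fill hc v2.
have [_ h1] := (vertex_iff n s (fill m s a1)).1 vx1.
have [_ h2] := (vertex_iff n s (fill m s a2)).1 vx2.
have := edge_core hc m0 (shape_fill a1 hc) (shape_fill a2 hc) h1 h2.
rewrite !flatten_fill // => core.
have s1 : size a1 = m by case: v1. have s2 : size a2 = m by case: v2.
split.
- case=> i [_ [_ [hi e]]].
  have [k km ek] := core.1 (ex_intro _ i (conj hi e)).
  by exists k => //; apply/(F_incr hc s1 s2 km).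
- case=> k km ek.
  have [i [hi e]] := core.2 (ex_intro2 _ _ k km ((F_incr hc s1 s2 km).2 ek)).
  by exists i; split => //; split.
Qed.

Lemma phiE s t a : is_composition m s -> is_composition m t -> size s = size t ->
  valid m s n a -> pi_ t (overline (fill m s a)) = fill m t a.
Proof.
move=> hs ht sz va.
have [H1s G1s _ _ _] := geom hs m0; have [H1t G1t _ _ _] := geom ht m0.
have mono := valid_mono m0 va; case: va => sa a0 st _.
set T := fill m s a.
have shT : Defs.shape T = s := shape_fill a hs.
have hms := hm hs; have hmt := hm ht.
have ex : exists Q, is_quasi_array (sumn (Defs.shape T)) Q /\ pi_ (Defs.shape T) Q = T.
  exists (Qa m a); rewrite shT hms; split.
  - split; first by rewrite size_map size_iota.
    split.
      case=> [|i] // hi; rewrite (nth_map 0) ?size_iota /=; last lia.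
      by rewrite size_map size_iota nth_iota; last lia.
    split.
      move=> i j hi hj; rewrite qa_Qa //; have := mono 0 (i + j - 2) ltac:(lia) ltac:(lia); lia.
    split.
      move=> j hj; rewrite !qa_Qa; try lia.
      have -> : 1 + j.+1 - 2 = (1 + j - 2).+1 by lia.
      have := st (1 + j - 2) ltac:(lia); lia.
    move=> i j hi hj; rewrite !qa_Qa; try lia.
    rewrite (_ : 1 + (i + j - 1) - 2 = i + j - 2); lia.
  - rewrite pi_eq /T /fill; congr reshape.
    apply/(eq_nthP); rewrite ?size_map ?H1s ?sizeF ?size_iota // => k hk.
    rewrite (nth_map (0,0)) ?H1s // nthF //.
    have [e1 e2 e3 e4] := G1s k hk.
    rewrite /rw /cl in e1 e2 e3 e4 *.
    case: (nth (0,0) (P s) k) e1 e2 e3 e4 => r c /= e1 e2 e3 e4.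
    rewrite qa_Qa; try lia.
    rewrite (_ : r + c - 2 = k) //; lia.
have [qQ piQ] := epsilon_spec (inhabits [::]) _ ex.
rewrite -/(overline T) in qQ piQ; set Q := overline T in qQ piQ *.
rewrite shT hms in qQ piQ.
case: qQ => _ [_ [_ [_ rel]]].
have firstrow : forall k, k < m -> qa Q (1, k.+1) = nth 0 a k.
  move=> k hk.
  have := congr1 (fun l => nth 0 (flatten l) k) piQ.
  rewrite pi_eq /T flatten_fill // reshapeKr ?size_map ?H1s ?hms //.
  rewrite (nth_map (0,0)) ?H1s // nthF //.
  have [e1 e2 e3 e4] := G1s k hk.
  rewrite /rw /cl in e1 e2 e3 e4 *.
  case: (nth (0,0) (P s) k) e1 e2 e3 e4 => r c /= e1 e2 e3 e4.
  rewrite rel; try lia.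
  have -> : r + c - 1 = k.+1 by lia.
  lia.
rewrite pi_eq /fill; congr reshape.
apply/(eq_nthP); rewrite ?size_map ?H1t ?sizeF ?size_iota // => k hk.
rewrite (nth_map (0,0)) ?H1t // nthF //.
have [e1 e2 e3 e4] := G1t k hk.
rewrite /rw /cl in e1 e2 e3 e4 *.
case: (nth (0,0) (P t) k) e1 e2 e3 e4 => r c /= e1 e2 e3 e4.
rewrite rel; try lia.
have -> : r + c - 1 = k.+1 by lia.
by rewrite firstrow.
Qed.

End Main.

Theorem corollary4p7 (m : nat) (sigma tau : seq nat) :
  0 < m -> is_composition m sigma -> is_composition m tau ->
  size sigma = size tau ->
  forall n : nat, 0 < n ->
  let phi := fun T => pi_ tau (overline T) in
  [/\ (forall T, vertex n sigma T -> vertex n tau (phi T)),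
      (forall T1 T2, vertex n sigma T1 -> vertex n sigma T2 -> phi T1 = phi T2 -> T1 = T2),
      (forall T', vertex n tau T' -> exists2 T, vertex n sigma T & phi T = T') &
      (forall T1 T2, vertex n sigma T1 -> vertex n sigma T2 ->
         (uedge n sigma T1 T2 <-> uedge n tau (phi T1) (phi T2)))].
Proof.
move=> m0 hs ht sz n n0 phi.
have vE : forall a, valid m sigma n a <-> valid m tau n a by move=> a; rewrite /valid sz.
have pE : forall a, valid m sigma n a -> phi (fill m sigma a) = fill m tau a.
  by move=> a va; rewrite /phi; exact: (phiE m0 hs ht sz va).
split.
- move=> T /(vertex_inv m0 hs) [va ->]; rewrite pE //; apply: vertex_fill => //; exact/vE.
- move=> T1 T2 /(vertex_inv m0 hs) [v1 ->] /(vertex_inv m0 hs) [v2 ->].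
  rewrite !pE // => /(congr1 (fun T => U m tau (flatten T))).
  rewrite !flatten_fill // !UF //; [by move->|by case: v2|by case: v1].
- move=> T' /(vertex_inv m0 ht) [va ->]; exists (fill m sigma (U m tau (flatten T'))).
    by apply: vertex_fill => //; apply/vE.
  by rewrite pE //; apply/vE.
- move=> T1 T2 /(vertex_inv m0 hs) [v1 ->] /(vertex_inv m0 hs) [v2 ->].
  rewrite !pE // (uedge_fill m0 hs v1 v2) (uedge_fill m0 ht) //; exact/vE.
Qed.
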